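(* Let $d\ge2$, $p>p_c(d)$, $\vec\ell\in S^{d-1}$, $\lambda>0$ and $\alpha>d+3$. There is a constant $c>0$ such that for every $L\ge1$ and every configuration $\omega$ with $0\in K_\infty$, \[ \Lambda_\omega(B(L,L^\alpha))\geq cL^{-2d\alpha}e^{-2\lambda\,\mathcal{B}\mathcal{K}(L,L^\alpha)}. \]
   Context: $\omega$ is a bond percolation configuration on $E(\mathbb{Z}^d)$ with unique infinite open cluster $K_\infty$. With $\ell=\lambda\vec\ell$, open edges $[x,y]$ have conductance $c^\omega([x,y])=e^{(x+y)\cdot\ell}$, closed ones $0$; $\pi^\omega(x)=\sum_{y\sim x}c^\omega(x,y)$. Let $f_1=\vec\ell,\dots,f_d$ be an orthonormal basis of $\mathbb{R}^d$, $B(L,L')=\{z\in\mathbb{Z}^d:|z\cdot\vec\ell|<L,\ |z\cdot f_i|<L'\ (2\le i\le d)\}$. Dirichlet form $\mathcal{E}(f,f)=\frac12\sum_{|x-y|=1}(f(y)-f(x))^2c^\omega([x,y])$. $\Lambda_\omega(B)=\inf\{\mathcal{E}(f,f): f=0 \text{ off } B\cap K_\infty,\ \|f\|_{L^2(\pi^\omega)}=1\}$ if $B\cap K_\infty\ne\emptyset$ and $\Lambda_\omega(B)=\infty$ otherwise. $\mathcal{B}\mathcal{K}(x)=0$ if $x\notin K_\infty$, otherwise $\min$ over infinite open self-avoiding paths $\pi$ from $x$ of $\max_i(x-\pi(i))\cdot\vec\ell$; $\mathcal{B}\mathcal{K}(L,L^\alpha)=\max_{x\in B(L,L^\alpha)}\mathcal{B}\mathcal{K}(x)$.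 *)

(* Defs.v *)
From HB Require Import structures.
From mathcomp Require Import all_boot all_order all_algebra.
From mathcomp Require Import all_classical all_reals all_analysis.
Set Implicit Arguments. Unset Strict Implicit. Unset Printing Implicit Defensive.
Import Order.TTheory GRing.Theory Num.Theory.
Local Open Scope classical_set_scope.
Local Open Scope ring_scope.

Definition Zd (d : nat) := 'rV[int]_d.

Definition unitv d (i : 'I_d) : Zd d := delta_mx 0 i.

Definition adj d (x y : Zd d) : bool :=
  [exists i : 'I_d, (y == x + unitv i) || (y == x - unitv i)].

(* A bond configuration: omega x y = edge [x,y] is open (only meaningful for
   neighbours; required to be symmetric, i.e. a function of the unordered edge). *)
Definition config d := Zd d -> Zd d -> bool.

Definition sym_config d (omega : config d) := forall x y, omega x y = omega y x.

Definition open_edge d (omega : config d) : rel (Zd d) :=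
  fun x y => adj x y && omega x y.

Definition connected d (omega : config d) (x y : Zd d) : Prop :=
  exists s : seq (Zd d), path (open_edge omega) x s /\ last x s = y.

Definition cluster d (omega : config d) (x : Zd d) : set (Zd d) :=
  [set y | connected omega x y].

Definition Kinf d (omega : config d) : set (Zd d) :=
  [set x | ~ finite_set (cluster omega x)].

Definition unique_inf_cluster d (omega : config d) : Prop :=
  forall x y, Kinf omega x -> Kinf omega y -> connected omega x y.

Definition dotZ {R : realType} d (z : Zd d) (v : 'rV[R]_d) : R :=
  \sum_(i < d) (z 0 i)%:~R * v 0 i.
Definition dotR {R : realType} d (u v : 'rV[R]_d) : R :=
  \sum_(i < d) u 0 i * v 0 i.

Definition on_sphere {R : realType} d (v : 'rV[R]_d) := dotR v v = 1.

Definition orthonormal_fam {R : realType} d (f : 'I_d -> 'rV[R]_d) :=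
  forall i j, dotR (f i) (f j) = (i == j)%:R.

(* conductance c^omega([x,y]) with ell = lam * ellv *)
Definition cond {R : realType} d (omega : config d) (lam : R) (ellv : 'rV[R]_d)
  (x y : Zd d) : R :=
  if open_edge omega x y then expR (lam * dotZ (x + y) ellv) else 0.

Definition piw {R : realType} d (omega : config d) (lam : R) (ellv : 'rV[R]_d)
  (x : Zd d) : R :=
  \sum_(i < d) (cond omega lam ellv x (x + unitv i) + cond omega lam ellv x (x - unitv i)).

(* B(L,L') with f_1 = f ord-0 = ellv *)
Definition box {R : realType} d (ellv : 'rV[R]_d) (f : 'I_d -> 'rV[R]_d) (L L' : R)
  : set (Zd d) :=
  [set z | `|dotZ z ellv| < L /\ forall i : 'I_d, (0 < val i)%N -> `|dotZ z (f i)| < L'].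

(* Dirichlet form: 1/2 sum over ordered neighbouring pairs (x,y) *)
Definition dirichlet {R : realType} d (omega : config d) (lam : R) (ellv : 'rV[R]_d)
  (g : Zd d -> R) : \bar R :=
  ((2^-1)%:E * \esum_(x in [set: Zd d])
     (\sum_(i < d) ((g (x + unitv i) - g x) ^+ 2 * cond omega lam ellv x (x + unitv i)
                  + (g (x - unitv i) - g x) ^+ 2 * cond omega lam ellv x (x - unitv i)))%:E)%E.

Definition L2pi {R : realType} d (omega : config d) (lam : R) (ellv : 'rV[R]_d)
  (g : Zd d -> R) : \bar R :=
  \esum_(x in [set: Zd d]) (g x ^+ 2 * piw omega lam ellv x)%:E.

Definition Lambda {R : realType} d (omega : config d) (lam : R) (ellv : 'rV[R]_d)
  (B : set (Zd d)) : \bar R :=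
  if `[< B `&` Kinf omega !=set0 >] then
    ereal_inf [set dirichlet omega lam ellv g | g in
      [set g : Zd d -> R | (forall x, ~ (B x /\ Kinf omega x) -> g x = 0)
                           /\ L2pi omega lam ellv g = 1%E]]
  else +oo%E.

Definition inf_sa_path d (omega : config d) (x : Zd d) (pth : nat -> Zd d) : Prop :=
  pth 0%N = x /\ injective pth /\ forall n, open_edge omega (pth n) (pth n.+1).

Definition BK {R : realType} d (omega : config d) (ellv : 'rV[R]_d) (x : Zd d) : \bar R :=
  if `[< Kinf omega x >] then
    ereal_inf [set ereal_sup [set (dotZ (x - pth n) ellv)%:E | n in [set: nat]]
              | pth in inf_sa_path omega x]
  else 0%E.

Definition BKbox {R : realType} d (omega : config d) (ellv : 'rV[R]_d)
  (f : 'I_d -> 'rV[R]_d) (L L' : R) : \bar R :=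
  ereal_sup [set BK omega ellv x | x in box ellv f L L'].

(* Main.v *)
Require Import Defs.
From HB Require Import structures.
From mathcomp Require Import all_boot all_order all_algebra.
From mathcomp Require Import all_classical all_reals all_analysis.
From mathcomp Require Import zify ring lra.
Import Order.TTheory GRing.Theory Num.Theory.
Local Open Scope classical_set_scope.
Local Open Scope ring_scope.

Section Aux.
Variable R : realType.
Variable d : nat.
Implicit Types (x y z : Zd d) (v : 'rV[R]_d).

Lemma dotZD x y v : dotZ (x + y) v = dotZ x v + dotZ y v.
Proof.
rewrite /dotZ -big_split /=; apply: eq_bigr => i _.
by rewrite mxE intrD mulrDl.
Qed.

Lemma dotZN x v : dotZ (- x) v = - dotZ x v.
Proof.
rewrite /dotZ -sumrN; apply: eq_bigr => i _.
by rewrite mxE intrN mulNr.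
Qed.

Lemma dotZB x y v : dotZ (x - y) v = dotZ x v - dotZ y v.
Proof. by rewrite dotZD dotZN. Qed.

Lemma dotZ_unit (i : 'I_d) v : dotZ (unitv i) v = v 0 i.
Proof.
rewrite /dotZ (bigD1 i) //= big1 ?addr0.
  by rewrite /unitv mxE !eqxx /= mul1r.
by move=> j ji; rewrite /unitv mxE eqxx /= (negbTE ji) mul0r.
Qed.

Lemma dotZ0 v : dotZ (0 : Zd d) v = 0.
Proof. by rewrite /dotZ big1 // => i _; rewrite mxE mul0r. Qed.

Lemma coord_le1 v (j : 'I_d) : dotR v v = 1 -> `|v 0 j| <= 1.
Proof.
move=> h.
have : v 0 j ^+ 2 <= 1.
  rewrite -h /dotR (bigD1 j) //= -expr2 lerDl.
  by apply: sumr_ge0 => i _; rewrite -expr2 sqr_ge0.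
by move=> h2; rewrite -(@ler_pXn2r _ 2) ?nnegrE // expr1n real_normK ?num_real.
Qed.

Lemma cond_ge0 (omega : config d) lam v x y : 0 <= cond omega lam v x y.
Proof. by rewrite /cond; case: ifP => _ //; exact: expR_ge0. Qed.

Lemma cond_le (omega : config d) lam v x y :
  cond omega lam v x y <= expR (lam * dotZ (x + y) v).
Proof. by rewrite /cond; case: ifP => _ //; exact: expR_ge0. Qed.

Lemma piw_le (omega : config d) lam v x : 0 <= lam -> dotR v v = 1 ->
  piw omega lam v x <= (2 * d)%:R * expR (lam * (2 * dotZ x v + 1)).
Proof.
move=> l0 hv.
have -> : (2 * d)%:R * expR (lam * (2 * dotZ x v + 1)) =
  \sum_(i < d) (expR (lam * (2 * dotZ x v + 1)) + expR (lam * (2 * dotZ x v + 1))).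
  by rewrite sumr_const card_ord -mulr2n -mulrnA mulr_natl.
apply: ler_sum => i _; apply: lerD.
  apply: (le_trans (cond_le _ _ _ _ _)); rewrite ler_expR; apply: ler_wpM2l => //.
  rewrite dotZD dotZD dotZ_unit addrA -mulr2n mulr_natl lerD2l.
  by rewrite (le_trans (ler_norm _)) // coord_le1.
apply: (le_trans (cond_le omega lam v x (x - unitv i))); rewrite ler_expR; apply: ler_wpM2l => //.
rewrite dotZD dotZB dotZ_unit addrA -mulr2n mulr_natl.
have := @coord_le1 v i hv; rewrite ler_norml => /andP[h1 _].
by rewrite lerD2l lerNl.
Qed.
End Aux.


Lemma complete_on (R : realType) d (f : 'I_d -> 'rV[R]_d) (k j : 'I_d) :
  orthonormal_fam f -> \sum_(i < d) f i 0 k * f i 0 j = (k == j)%:R.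
Proof.
move=> hf.
pose F := \matrix_(i < d, k < d) f i 0 k.
have h1 : F *m F^T = 1%:M.
  apply/matrixP => i i'; rewrite !mxE -hf /dotR.
  by apply: eq_bigr => l _; rewrite !mxE.
have := mulmx1C h1 => /matrixP /(_ k j); rewrite !mxE => <-.
by apply: eq_bigr => l _; rewrite !mxE.
Qed.

Lemma box_coord (R : realType) d (ellv : 'rV[R]_d) (f : 'I_d -> 'rV[R]_d) (L L' : R) z :
  orthonormal_fam f -> (forall i : 'I_d, val i = 0%N -> f i = ellv) ->
  L <= L' -> box ellv f L L' z -> forall j : 'I_d, `|(z 0 j)%:~R : R| < d%:R * L'.
Proof.
move=> hf hf0 LL [hz1 hz2] j.
have ez : (z 0 j)%:~R = \sum_(i < d) dotZ z (f i) * f i 0 j :> R.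
  rewrite /dotZ; under eq_bigr do rewrite mulr_suml; rewrite exchange_big /=.
  rewrite (eq_bigr (fun k => (z 0 k)%:~R * (k == j)%:R)); last first.
    move=> k _; rewrite -(@complete_on _ _ f k j hf) mulr_sumr.
    by apply: eq_bigr => i _; rewrite mulrA.
  rewrite (bigD1 j) //= eqxx mulr1 big1 ?addr0 // => k kj.
  by rewrite (negbTE kj) mulr0.
rewrite ez; apply: (le_lt_trans (ler_norm_sum _ _ _)).
have -> : d%:R * L' = \sum_(i < d) L'.
  by rewrite sumr_const card_ord mulr_natl.
apply: ltr_sum; first by apply/hasP; exists j; rewrite ?mem_index_enum.
move=> i _; rewrite normrM.
have h1 : `|f i 0 j| <= 1 by apply: coord_le1; rewrite hf eqxx.
have h2 : `|dotZ z (f i)| < L'.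
  case: (posnP (val i)) => [i0|ip]; last exact: hz2.
  by rewrite hf0 //; apply: lt_le_trans LL.
apply: (le_lt_trans _ h2); rewrite -[X in _ <= X]mulr1.
by apply: ler_wpM2l.
Qed.


Lemma box_enum (R : realType) d (ellv : 'rV[R]_d) (f : 'I_d -> 'rV[R]_d) (L L' : R) :
  orthonormal_fam f -> (forall i : 'I_d, val i = 0%N -> f i = ellv) ->
  L <= L' -> 1 <= L' ->
  exists M : nat, (M%:R <= ((2 * d + 3)%:R * L') ^+ d) /\
   exists psi : nat -> Zd d, set_inj `I_M psi /\
     forall z, box ellv f L L' z -> exists2 k, (k < M)%N & psi k = z.
Proof.
move=> hf hf0 LL L1.
have L0 : 0 <= L' by apply: le_trans L1.
pose D := d%:R * L'.
have D0 : 0 <= D by rewrite /D mulr_ge0.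
pose N := Num.Def.trunc D.
have [ND DN] := andP (truncn_itv D0).
pose B := N.*2.+1.
pose T := {ffun 'I_d -> 'I_B}.
pose phi (h : T) : Zd d := \row_j ((h j : nat)%:Z - N%:Z).
have phi_inj : injective phi.
  move=> h1 h2 /matrixP e; apply/ffunP => j; apply/val_inj.
  by have := e 0 j; rewrite !mxE => /addIr [].
pose h0 : T := [ffun => ord0].
pose psi n := phi (nth h0 (enum T) n).
exists #|T|; split.
  rewrite card_ffun card_ord card_ord natrX; apply: lerXn2r; rewrite ?nnegrE //.
    by rewrite mulr_ge0.
  rewrite /B -addn1 -mul2n !natrD.
  have d0 : 0 <= (d%:R : R) by [].
  rewrite /D in ND; nra.
exists psi; split.
  move=> a b ha hb /phi_inj /eqP.
  rewrite nth_uniq ?enum_uniq -?cardE //; first by move/eqP.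
  - by move: ha => /set_mem.
  - by move: hb => /set_mem.
move=> z hz.
have zb j : (- N%:Z <= z 0 j <= N%:Z)%R.
  have := @box_coord _ _ _ _ _ _ _ hf hf0 LL hz j; rewrite -/D => h.
  have h2 := lt_trans h DN.
  move: h2; rewrite -intr_norm -[N.+1%:R]/((N.+1)%:Z%:~R : R) ltr_int => h3.
  apply/andP; split; lia.
pose h : T := [ffun j : 'I_d => inord (absz (z 0 j + N%:Z))].
have hz' : phi h = z.
  apply/matrixP => i j; rewrite !mxE (ord1 i).
  have := zb j => /andP [a b].
  rewrite ffunE inordK; first by rewrite gez0_abs; lia.
  rewrite /B; lia.
exists (index h (enum T)); first by rewrite cardE index_mem mem_enum.
by rewrite /psi nth_index ?mem_enum.
Qed.


Lemma cs_sum (R : realType) (u : nat -> R) n :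
  (\sum_(k < n) u k) ^+ 2 <= n%:R * \sum_(k < n) u k ^+ 2.
Proof.
elim: n => [|n IH]; first by rewrite !big_ord0 expr0n /= mul0r.
rewrite !big_ord_recr /=.
set S := \sum_(i < n) u i; set Q := \sum_(i < n) u i ^+ 2; set a := u n.
move: IH; rewrite -/S -/Q => IH.
have Q0 : 0 <= Q by apply: sumr_ge0 => i _; rewrite sqr_ge0.
have n0 : 0 <= (n%:R : R) by [].
case: (posnP n) => [n00|np].
  move: IH; rewrite /S /Q n00 !big_ord0 => _. by rewrite -natr1 /= !add0r mul1r.
have npos : 0 < (n%:R : R) by rewrite ltr0n.
have sq : 0 <= (S - n%:R * a) ^+ 2 by rewrite sqr_ge0.
have key : 2 * S * a <= Q + n%:R * a ^+ 2.
  rewrite -(ler_pM2l npos); nra.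
rewrite -natr1; nra.
Qed.


Definition inner (R : realType) d (omega : config d) (lam : R) (ellv : 'rV[R]_d)
  (g : Zd d -> R) (x : Zd d) : R :=
  \sum_(i < d) ((g (x + unitv i) - g x) ^+ 2 * cond omega lam ellv x (x + unitv i)
              + (g (x - unitv i) - g x) ^+ 2 * cond omega lam ellv x (x - unitv i)).

Arguments inner {R d}.

Lemma inner_ge0 (R : realType) d (omega : config d) (lam : R) ellv g x :
  0 <= inner omega lam ellv g x.
Proof.
apply: sumr_ge0 => i _; apply: addr_ge0; apply: mulr_ge0;
  rewrite ?sqr_ge0 ?cond_ge0 //.
Qed.

Lemma path_esum (R : realType) d (omega : config d) (lam : R) ellv g (pth : nat -> Zd d) n :
  injective pth ->
  ((\sum_(k < n) inner omega lam ellv g (pth k))%:E <=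
    \esum_(y in [set: Zd d]) (inner omega lam ellv g y)%:E)%E.
Proof.
move=> pinj; apply: esum_ge; exists (pth @` `I_n).
  by split => //; apply: finite_image; exact: finite_II.
rewrite fsbig_image; last by move=> a b _ _; apply: pinj.
by rewrite -fsbig_ord sumEFin.
Qed.

Lemma pigeon d (Bx : set (Zd d)) (M : nat) (psi : nat -> Zd d) (pth : nat -> Zd d) :
  (forall z, Bx z -> exists2 k, (k < M)%N & psi k = z) -> injective pth ->
  exists n, (n <= M)%N /\ ~ Bx (pth n).
Proof.
move=> hB pinj; apply: contrapT => hn.
have hall (n : 'I_M.+1) : exists2 k, (k < M)%N & psi k = pth n.
  apply: hB; apply: contrapT => hn'; apply: hn; exists n; split => //.
  by rewrite -ltnS.
pose kf (n : 'I_M.+1) : 'I_M := Ordinal (s2valP (cid2 (hall n))).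
have kinj : injective kf.
  move=> a b /(congr1 val) /= e; apply: val_inj; apply: pinj.
  by rewrite -(s2valP' (cid2 (hall a))) -(s2valP' (cid2 (hall b))) e.
by have := @leq_card _ _ kf kinj; rewrite !card_ord ltnn.
Qed.

Lemma point_bound (R : realType) d (omega : config d) (lam : R) (ellv : 'rV[R]_d)
  (g : Zd d -> R) (Bx : set (Zd d)) (M : nat) (psi : nat -> Zd d) (x : Zd d) (r s : R) :
  0 <= lam -> dotR ellv ellv = 1 ->
  (forall z, Bx z -> exists2 k, (k < M)%N & psi k = z) ->
  (forall z, ~ Bx z -> g z = 0) ->
  Kinf omega x -> (BK omega ellv x <= r%:E)%E ->
  (\esum_(y in [set: Zd d]) (inner omega lam ellv g y)%:E <= s%:E)%E ->
  g x ^+ 2 * piw omega lam ellv x <= M%:R * s * (2 * d)%:R * expR (lam * (2 * r + 3)).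
Proof.
move=> l0 hv hB hg0 Kx hBK hs.
have [pth [[p0 [pinj popen]] hpb]] : exists pth, inf_sa_path omega x pth /\
    forall n, dotZ x ellv - (r + 1) < dotZ (pth n) ellv.
  move: hBK; rewrite /BK asboolT // => hBK.
  have := le_lt_trans hBK (_ : r%:E < (r+1)%:E)%E.
  move=> /(_ _) /ereal_inf_lt []; first by rewrite lte_fin ltrDl.
  move=> y [pth hp <-] hy; exists pth; split => // n.
  have : ((dotZ (x - pth n) ellv)%:E <= ereal_sup [set (dotZ (x - pth n) ellv)%:E | n in [set: nat]])%E.
    by apply: ereal_sup_ubound; exists n.
  move=> /le_lt_trans /(_ hy); rewrite lte_fin dotZB; lra.
have [n [nM nB]] := @pigeon _ _ _ _ _ hB pinj.
have gn : g (pth n) = 0 := hg0 _ nB.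
pose u k := g (pth k.+1) - g (pth k).
have tel : g x ^+ 2 = (\sum_(k < n) u k) ^+ 2.
  rewrite /u -(big_mkord xpredT (fun k => g (pth k.+1) - g (pth k))).
  by rewrite telescope_sumr // gn p0 sub0r sqrrN.
have S20 : 0 <= \sum_(k < n) u k ^+ 2 by apply: sumr_ge0 => k _; exact: sqr_ge0.
have cs : g x ^+ 2 <= M%:R * \sum_(k < n) u k ^+ 2.
  rewrite tel; apply: le_trans (@cs_sum _ u n) _; apply: ler_wpM2r => //.
  by rewrite ler_nat.
pose cmin := expR (lam * (2 * (dotZ x ellv - (r + 1)))).
have hk k : u k ^+ 2 * cmin <= inner omega lam ellv g (pth k).
  have op := popen k.
  have hc : cmin <= cond omega lam ellv (pth k) (pth k.+1).
    rewrite /cond op ler_expR; apply: ler_wpM2l => //; rewrite dotZD.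
    have := hpb k; have := hpb k.+1; lra.
  apply: le_trans (_ : u k ^+ 2 * cond omega lam ellv (pth k) (pth k.+1) <= _).
    by apply: ler_wpM2l => //; exact: sqr_ge0.
  have rest0 (i : 'I_d) : 0 <= \sum_(j < d | j != i) ((g (pth k + unitv j) - g (pth k)) ^+ 2 *
       cond omega lam ellv (pth k) (pth k + unitv j) +
       (g (pth k - unitv j) - g (pth k)) ^+ 2 * cond omega lam ellv (pth k) (pth k - unitv j)).
    by apply: sumr_ge0 => j _; apply: addr_ge0; apply: mulr_ge0; rewrite ?sqr_ge0 ?cond_ge0.
  move: (op) => /andP [/existsP [i /orP [/eqP e|/eqP e]] _]; rewrite /inner (bigD1 i) //=.
  - have := rest0 i; rewrite -e /u.
    have : 0 <= (g (pth k - unitv i) - g (pth k)) ^+ 2 * cond omega lam ellv (pth k) (pth k - unitv i).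
      by apply: mulr_ge0; rewrite ?sqr_ge0 ?cond_ge0.
    lra.
  - have := rest0 i; rewrite -e /u.
    have : 0 <= (g (pth k + unitv i) - g (pth k)) ^+ 2 * cond omega lam ellv (pth k) (pth k + unitv i).
      by apply: mulr_ge0; rewrite ?sqr_ge0 ?cond_ge0.
    lra.
have hsum : cmin * \sum_(k < n) u k ^+ 2 <= s.
  rewrite mulr_sumr; apply: le_trans (_ : _ <= \sum_(k < n) inner omega lam ellv g (pth k)) _.
    by apply: ler_sum => k _; rewrite mulrC; exact: hk k.
  by rewrite -lee_fin; apply: le_trans hs; apply: path_esum.
have hpi := @piw_le _ _ omega lam ellv x l0 hv.
have E1 : expR (lam * (2 * dotZ x ellv + 1)) = cmin * expR (lam * (2 * r + 3)).
  by rewrite /cmin -expRD -mulrDr; congr (expR (_ * _)); lra.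
have pi0 : 0 <= piw omega lam ellv x.
  by apply: sumr_ge0 => i _; apply: addr_ge0; apply: cond_ge0.
apply: le_trans (_ : _ <= (M%:R * \sum_(k < n) u k ^+ 2) *
   ((2 * d)%:R * (cmin * expR (lam * (2 * r + 3))))) _.
  by apply: ler_pM => //; [exact: sqr_ge0 | rewrite -E1].
have key : forall a b c' dd e : R, 0 <= a -> 0 <= dd -> 0 <= e -> c' * b <= s ->
    a * b * (dd * (c' * e)) <= a * s * dd * e.
  move=> a b c' dd e a0 dd0 e0 h.
  rewrite (_ : a * b * (dd * (c' * e)) = a * (c' * b) * dd * e); last by ring.
  by apply: ler_wpM2r => //; apply: ler_wpM2r => //; apply: ler_wpM2l.
by apply: key => //; exact: expR_ge0.
Qed.


Theorem lemma6p1 (R : realType) (d : nat) (ellv : 'rV[R]_d) (lam alpha : R)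
  (f : 'I_d -> 'rV[R]_d) :
  (2 <= d)%N -> on_sphere ellv -> 0 < lam -> (d + 3)%:R < alpha ->
  orthonormal_fam f -> (forall i : 'I_d, val i = 0%N -> f i = ellv) ->
  exists c : R, 0 < c /\
    forall (L : R) (omega : config d),
      1 <= L -> sym_config omega -> unique_inf_cluster omega -> Kinf omega 0 ->
      ((c * L `^ (- (2 * d%:R * alpha)))%:E
         * expeR (- (2 * lam)%:E * BKbox omega ellv f L (L `^ alpha))
      <= Lambda omega lam ellv (box ellv f L (L `^ alpha)))%E.
Proof.
move=> hd hsph hlam hal hf hf0.
pose K0 : R := (2 * d + 3)%:R ^+ d.
have K00 : 0 < K0 by rewrite exprn_gt0 // ltr0n addn3.
have d0 : 0 < (d%:R : R) by rewrite ltr0n; apply: leq_trans hd.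
pose C : R := 4 * d%:R * K0 ^+ 2 * expR (3 * lam).
have C0 : 0 < C by rewrite !mulr_gt0 ?expR_gt0 ?exprn_gt0.
exists C^-1; split; first by rewrite invr_gt0.
move=> L omega L1 _ _ K0x.
have al1 : 1 <= alpha.
  apply: le_trans (ltW hal); rewrite ler1n; by rewrite addn3.
have L0 : 0 <= L by apply: le_trans L1.
have LLa : L <= L `^ alpha by rewrite -{1}(powRr1 L0) ler_powR.
have La1 : 1 <= L `^ alpha by apply: le_trans LLa.
have [M [hM [psi [psiinj hpsi]]]] := @box_enum _ _ ellv f L (L `^ alpha) hf hf0 LLa La1.
set Bx := box ellv f L (L `^ alpha).
have B0 : Bx 0.
  split; first by rewrite dotZ0 normr0; apply: lt_le_trans L1.
  by move=> i _; rewrite dotZ0 normr0; apply: lt_le_trans La1.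
rewrite /Lambda asboolT; last by exists 0.
have BK0 : forall x, (0 <= BK omega ellv x)%E.
  move=> x; rewrite /BK; case: asboolP => // _.
  apply: le_ereal_inf_tmp => _ [pth [p0 _] <-].
  apply: ereal_sup_ge; exists (dotZ (x - pth 0%N) ellv)%:E; first by exists 0%N.
  by rewrite p0 subrr dotZ0.
have b0 : (0 <= BKbox omega ellv f L (L `^ alpha))%E.
  apply: ereal_sup_ge; exists (BK omega ellv 0); first by exists 0.
  exact: BK0.
have Dg0 : forall g : Zd d -> R, (0 <= dirichlet omega lam ellv g)%E.
  move=> g; apply: mule_ge0; first by rewrite lee_fin invr_ge0.
  by apply: esum_ge0 => x _; rewrite lee_fin; exact: inner_ge0.
case hb: (BKbox omega ellv f L (L `^ alpha)) b0 => [r| |] // b0; last first.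
  rewrite -EFinN lt0_muley /=; last by rewrite lte_fin oppr_lt0 mulr_gt0.
  rewrite mule0; apply: le_ereal_inf_tmp => _ [g _ <-]; exact: Dg0.
apply: le_ereal_inf_tmp => _ [g [hg0 hL2] <-].
have -> : dirichlet omega lam ellv g =
  ((2^-1)%:E * \esum_(x in [set: Zd d]) (inner omega lam ellv g x)%:E)%E by [].
have S0 : (0 <= \esum_(x in [set: Zd d]) (inner omega lam ellv g x)%:E)%E.
  by apply: esum_ge0 => x _; rewrite lee_fin; exact: inner_ge0.
case hS: (\esum_(x in [set: Zd d]) (inner omega lam ellv g x)%:E) S0 => [s| |] // S0; last first.
  by rewrite gt0_muley ?leey // lte_fin invr_gt0.
have s0 : 0 <= s by rewrite -lee_fin.
pose Q := M%:R * s * (2 * d)%:R * expR (lam * (2 * r + 3)).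
have Q0 : 0 <= Q by rewrite /Q !mulr_ge0 ?expR_ge0.
have hpt x : g x ^+ 2 * piw omega lam ellv x <= Q.
  case: (pselect (Bx x /\ Kinf omega x)) => [[Bxx Kx]|nb].
    apply: (@point_bound _ _ omega lam ellv g Bx M psi x r s) => //.
    - exact: ltW.
    - by move=> z nz; apply: hg0 => -[].
    - by rewrite -hb; apply: ereal_sup_ubound; exists x.
    - by rewrite hS.
  by rewrite hg0 // expr0n /= mul0r.
have h1 : 1 <= M%:R * Q.
  rewrite -lee_fin -hL2 /L2pi.
  have -> : \esum_(x in [set: Zd d]) (g x ^+ 2 * piw omega lam ellv x)%:E =
      \esum_(x in psi @` `I_M) (g x ^+ 2 * piw omega lam ellv x)%:E.
    rewrite [RHS]esum_mkcond; apply: eq_esum => x _; case: ifPn => // /negP xn.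
    rewrite hg0 ?expr0n /= ?mul0r //.
    move=> [Bxx _]; apply: xn; have [k kM <-] := hpsi x Bxx; rewrite inE; exists k => //.
  rewrite esum_image //.
  apply: le_trans (le_esum (b := fun=> Q%:E) _) _; first by move=> k _; rewrite lee_fin hpt.
  rewrite esum_fset ?finite_II // -fsbig_ord sumEFin sumr_const card_ord lee_fin mulr_natl.
  done.
rewrite -EFinN -EFinM /= -!EFinM lee_fin.
pose P := (L `^ alpha) ^+ d.
have P0 : 0 < P by rewrite exprn_gt0 // powR_gt0 // (lt_le_trans ltr01 L1).
have eP : L `^ (- (2 * d%:R * alpha)) = (P ^+ 2)^-1.
  rewrite powRN; congr (_^-1).
  rewrite (_ : 2 * d%:R * alpha = alpha * d%:R * 2%:R); last by lra.
  by rewrite !powRrM (@powR_mulrn _ _ d) ?powR_ge0 // (@powR_mulrn _ _ 2) // exprn_ge0 // powR_ge0.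
have hMP : M%:R <= K0 * P by rewrite /K0 /P -exprMn.
have hM2 : M%:R ^+ 2 <= (K0 * P) ^+ 2.
  by apply: lerXn2r; rewrite ?nnegrE // mulr_ge0 // ltW.
pose X := expR (2 * lam * r); pose Y := expR (3 * lam).
have X0 : 0 < X by apply: expR_gt0.
have Y0 : 0 < Y by apply: expR_gt0.
have eX : expR (lam * (2 * r + 3)) = X * Y.
  by rewrite /X /Y -expRD; congr expR; lra.
have eN : expR (- (2 * lam) * r) = X^-1 by rewrite mulNr expRN.
rewrite eP eN.
have W0 : 0 <= (2 * d)%:R * s * X * Y.
  by rewrite !mulr_ge0 // ltW.
have h3 := ler_wpM2r W0 hM2.
move: h1; rewrite /Q eX => h1.
have Z0 : 0 < C * P ^+ 2 * X.
  by apply: mulr_gt0 => //; apply: mulr_gt0 => //; apply: exprn_gt0.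
rewrite -!invfM -(ler_pM2l Z0) mulfV ?gt_eqF //.
have e1 : C * P ^+ 2 * X * (2^-1 * s) = (K0 * P) ^+ 2 * ((2 * d)%:R * s * X * Y).
  rewrite /C natrM.
  have gen : forall a b c' x y z : R,
      4 * a * b ^+ 2 * y * c' ^+ 2 * x * (2^-1 * z) = (b * c') ^+ 2 * (2 * a * z * x * y).
    by move=> a b c' x y z; field.
  exact: gen.
have e2 : M%:R * (M%:R * s * (2 * d)%:R * (X * Y)) = M%:R ^+ 2 * ((2 * d)%:R * s * X * Y).
  have gen : forall a b x y z : R, a * (a * z * b * (x * y)) = a ^+ 2 * (b * z * x * y).
    by move=> a b x y z; ring.
  exact: gen.
by rewrite e1; apply: le_trans h1 _; rewrite e2.
Qed.
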